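(* Let $X\subset\mathbb{P}^{n+1}$ be a smooth cubic hypersurface over $\mathbb{Q}$ with $n\ge3$. Let $P\in X(\mathbb{Q})$ be a non-Eckardt point and let $Q\in X_P(\mathbb{Q})$ with $T_Q X\ne T_P X$. Then $Q\in\operatorname{Span}(P)$.
   Context: $T_P X$ is the tangent hyperplane to $X$ at $P$ and $X_P:=X\cap T_P X$. A point $P\in X$ is an Eckardt point if $X_P$ is a cone with vertex $P$. For $S\subseteq X(\mathbb{Q})$, define $S=S_0\subseteq S_1\subseteq\cdots$ by letting $S_{k+1}$ be the set of $R\in X(\mathbb{Q})$ with either $R\in S_k$ or $\ell\cdot X=P+Q+R$ for some $\mathbb{Q}$-line $\ell\not\subset X$ and some $P,Q\in S_k$ (possibly equal); $\operatorname{Span}(S)=\bigcup_kS_k$ and $\operatorname{Span}(P)=\operatorname{Span}(\{P\})$. *)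

(* Defs.v *)
From HB Require Import structures.
From mathcomp Require Import all_boot all_order all_algebra all_field.
Set Implicit Arguments. Unset Strict Implicit. Unset Printing Implicit Defensive.
Import GRing.Theory Num.Theory.
Local Open Scope ring_scope.

(* A cubic form F(x) = sum_{i,j,k} c i j k x_i x_j x_k with rational coefficients. *)
Definition coeffs (m : nat) := 'I_m -> 'I_m -> 'I_m -> rat.

Definition cubF (R : fieldType) (m : nat) (c : coeffs m) (x : 'rV[R]_m) : R :=
  \sum_(i < m) \sum_(j < m) \sum_(k < m) ratr (c i j k) * x 0 i * x 0 j * x 0 k.

Definition gradF (R : fieldType) (m : nat) (c : coeffs m) (x : 'rV[R]_m) (l : 'I_m) : R :=
  \sum_(i < m) \sum_(j < m) \sum_(k < m) ratr (c i j k) *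
    ((i == l)%:R * x 0 j * x 0 k + x 0 i * (j == l)%:R * x 0 k
     + x 0 i * x 0 j * (k == l)%:R).

Definition tangent (R : fieldType) (m : nat) (c : coeffs m) (P x : 'rV[R]_m) : bool :=
  \sum_(l < m) gradF c P l * x 0 l == 0.

Definition smooth (m : nat) (c : coeffs m) : Prop :=
  forall x : 'rV[algC]_m, x != 0 -> exists l, gradF c x l != 0.

Definition onX (m : nat) (c : coeffs m) (x : 'rV[rat]_m) : Prop :=
  x != 0 /\ cubF c x = 0.

Definition proj_eq (R : fieldType) (m : nat) (x y : 'rV[R]_m) : Prop :=
  exists k : R, k != 0 /\ x = k *: y.

Definition toC (m : nat) (x : 'rV[rat]_m) : 'rV[algC]_m := map_mx ratr x.

(* P is an Eckardt point: X_P = X ∩ T_P X is a cone with vertex P, i.e. for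
   every (geometric) point R of X_P, the line through P and R lies in X_P. *)
Definition eckardt (m : nat) (c : coeffs m) (P : 'rV[rat]_m) : Prop :=
  forall R : 'rV[algC]_m, R != 0 -> cubF c R = 0 -> tangent c (toC P) R ->
    forall a b : algC,
      cubF c (a *: toC P + b *: R) = 0 /\ tangent c (toC P) (a *: toC P + b *: R).

(* There is a Q-line l (spanned by independent rational U, V), not contained
   in X, with l . X = P + Q + R as divisors: F restricted to l factors as
   k * L_P * L_Q * L_R with k <> 0, where L_S is the linear form in the line
   parameters (a:b) vanishing at the parameter of S. *)
Definition line_third (m : nat) (c : coeffs m) (P Q R : 'rV[rat]_m) : Prop :=
  exists U V : 'rV[rat]_m,
    (forall a b : rat, a *: U + b *: V = 0 -> a = 0 /\ b = 0) /\
    exists p1 p2 q1 q2 r1 r2 k : rat,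
      [/\ proj_eq P (p1 *: U + p2 *: V), proj_eq Q (q1 *: U + q2 *: V),
          proj_eq R (r1 *: U + r2 *: V), k != 0 &
          forall a b : rat, cubF c (a *: U + b *: V) =
            k * (p2 * a - p1 * b) * (q2 * a - q1 * b) * (r2 * a - r1 * b)].

Inductive span (m : nat) (c : coeffs m) (S : 'rV[rat]_m -> Prop) : 'rV[rat]_m -> Prop :=
| span_base R : S R -> span c S R
| span_step P Q R : span c S P -> span c S Q -> onX c R -> line_third c P Q R ->
    span c S R.

Definition spanP (m : nat) (c : coeffs m) (P : 'rV[rat]_m) : 'rV[rat]_m -> Prop :=
  span c (fun R => proj_eq R P).

(* Main.v *)
Require Import Defs.
From HB Require Import structures.
From mathcomp Require Import all_boot all_order all_algebra all_field.
From mathcomp Require Import ring.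
From Stdlib Require Import Classical.
Set Implicit Arguments. Unset Strict Implicit. Unset Printing Implicit Defensive.
Import GRing.Theory Num.Theory.
Local Open Scope ring_scope.


Section Tri.
Variables (R : numFieldType) (m : nat) (c : coeffs m).

Definition B3 (x y z : 'rV[R]_m) : R :=
  \sum_(i < m) \sum_(j < m) \sum_(k < m) ratr (c i j k) * x 0 i * y 0 j * z 0 k.

Definition T (x y z : 'rV[R]_m) : R :=
  (B3 x y z + B3 x z y + B3 y x z + B3 y z x + B3 z x y + B3 z y x) / 6.

Lemma B3D1 x x' y z : B3 (x + x') y z = B3 x y z + B3 x' y z.
Proof.
rewrite /B3 -big_split; apply: eq_bigr => i _; rewrite -big_split.
apply: eq_bigr => j _; rewrite -big_split; apply: eq_bigr => k _.
rewrite !mxE /=; ring.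
Qed.
Lemma B3D2 x y y' z : B3 x (y + y') z = B3 x y z + B3 x y' z.
Proof.
rewrite /B3 -big_split; apply: eq_bigr => i _; rewrite -big_split.
apply: eq_bigr => j _; rewrite -big_split; apply: eq_bigr => k _.
rewrite !mxE /=; ring.
Qed.
Lemma B3D3 x y z z' : B3 x y (z + z') = B3 x y z + B3 x y z'.
Proof.
rewrite /B3 -big_split; apply: eq_bigr => i _; rewrite -big_split.
apply: eq_bigr => j _; rewrite -big_split; apply: eq_bigr => k _.
rewrite !mxE /=; ring.
Qed.
Lemma B3Z1 a x y z : B3 (a *: x) y z = a * B3 x y z.
Proof.
rewrite /B3 mulr_sumr; apply: eq_bigr => i _; rewrite mulr_sumr.
apply: eq_bigr => j _; rewrite mulr_sumr; apply: eq_bigr => k _.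
rewrite !mxE /=; ring.
Qed.
Lemma B3Z2 a x y z : B3 x (a *: y) z = a * B3 x y z.
Proof.
rewrite /B3 mulr_sumr; apply: eq_bigr => i _; rewrite mulr_sumr.
apply: eq_bigr => j _; rewrite mulr_sumr; apply: eq_bigr => k _.
rewrite !mxE /=; ring.
Qed.
Lemma B3Z3 a x y z : B3 x y (a *: z) = a * B3 x y z.
Proof.
rewrite /B3 mulr_sumr; apply: eq_bigr => i _; rewrite mulr_sumr.
apply: eq_bigr => j _; rewrite mulr_sumr; apply: eq_bigr => k _.
rewrite !mxE /=; ring.
Qed.

Lemma TS12 x y z : T x y z = T y x z.
Proof. rewrite /T; congr (_ / _); ring. Qed.
Lemma TS23 x y z : T x y z = T x z y.
Proof. rewrite /T; congr (_ / _); ring. Qed.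
Lemma TS13 x y z : T x y z = T z y x.
Proof. rewrite /T; congr (_ / _); ring. Qed.

Lemma TD1 x x' y z : T (x + x') y z = T x y z + T x' y z.
Proof. rewrite /T !(B3D1, B3D2, B3D3); ring. Qed.
Lemma TZ1 a x y z : T (a *: x) y z = a * T x y z.
Proof. rewrite /T !(B3Z1, B3Z2, B3Z3); ring. Qed.
Lemma TD2 x y y' z : T x (y + y') z = T x y z + T x y' z.
Proof. by rewrite TS12 TD1 TS12 (TS12 y'). Qed.
Lemma TD3 x y z z' : T x y (z + z') = T x y z + T x y z'.
Proof. by rewrite TS13 TD1 TS13 (TS13 z'). Qed.
Lemma TZ2 a x y z : T x (a *: y) z = a * T x y z.
Proof. by rewrite TS12 TZ1 TS12. Qed.
Lemma TZ3 a x y z : T x y (a *: z) = a * T x y z.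
Proof. by rewrite TS13 TZ1 TS13. Qed.
Lemma TN1 x y z : T (- x) y z = - T x y z.
Proof. by rewrite -scaleN1r TZ1 mulN1r. Qed.
Lemma TN2 x y z : T x (- y) z = - T x y z.
Proof. by rewrite -scaleN1r TZ2 mulN1r. Qed.
Lemma TN3 x y z : T x y (- z) = - T x y z.
Proof. by rewrite -scaleN1r TZ3 mulN1r. Qed.
Lemma TB1 x x' y z : T (x - x') y z = T x y z - T x' y z.
Proof. by rewrite TD1 TN1. Qed.
Lemma TB2 x y y' z : T x (y - y') z = T x y z - T x y' z.
Proof. by rewrite TD2 TN2. Qed.
Lemma TB3 x y z z' : T x y (z - z') = T x y z - T x y z'.
Proof. by rewrite TD3 TN3. Qed.
Lemma T0_1 y z : T 0 y z = 0.
Proof. by rewrite -(scale0r 0) TZ1 mul0r. Qed.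
Lemma T0_2 y z : T y 0 z = 0.
Proof. by rewrite -(scale0r 0) TZ2 mul0r. Qed.
Lemma T0_3 y z : T y z 0 = 0.
Proof. by rewrite -(scale0r 0) TZ3 mul0r. Qed.

Lemma six_neq0 : (6 : R) != 0. Proof. by rewrite pnatr_eq0. Qed.

Lemma cubF_T x : cubF c x = T x x x.
Proof. rewrite /T /cubF -/(B3 x x x); by field. Qed.

Lemma sum_delta (a : 'I_m -> R) i : \sum_(l < m) (i == l)%:R * a l = a i.
Proof.
rewrite (bigD1 i) //= eqxx mul1r big1 ?addr0 // => l /negbTE.
by rewrite eq_sym => ->; rewrite mul0r.
Qed.

Lemma grad_T (x y : 'rV[R]_m) : \sum_(l < m) gradF c x l * y 0 l = 3 * T x x y.
Proof.
have -> : \sum_(l < m) gradF c x l * y 0 l = B3 y x x + B3 x y x + B3 x x y.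
  rewrite /gradF /B3.
  under eq_bigr => l _ do rewrite mulr_suml.
  rewrite exchange_big -!big_split /=; apply: eq_bigr => i _.
  under eq_bigr => l _ do rewrite mulr_suml.
  rewrite exchange_big -!big_split /=; apply: eq_bigr => j _.
  under eq_bigr => l _ do rewrite mulr_suml.
  rewrite exchange_big -!big_split /=; apply: eq_bigr => k _.
  rewrite (eq_bigr (fun l => (i == l)%:R * (ratr (c i j k) * x 0 j * x 0 k * y 0 l)
     + (j == l)%:R * (ratr (c i j k) * x 0 i * x 0 k * y 0 l)
     + (k == l)%:R * (ratr (c i j k) * x 0 i * x 0 j * y 0 l))); last first.
    by move=> l _; ring.
  rewrite !big_split /= !sum_delta; ring.
by rewrite /T; field.
Qed.

End Tri.


Section Morph.
Variables (m : nat) (c : coeffs m).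

Lemma toCE (x : 'rV[rat]_m) i : toC x 0 i = ratr (x 0 i).
Proof. by rewrite /toC mxE. Qed.

Lemma B3_toC (x y z : 'rV[rat]_m) :
  B3 c (toC x) (toC y) (toC z) = ratr (B3 c x y z).
Proof.
rewrite /B3 rmorph_sum; apply: eq_bigr => i _; rewrite rmorph_sum.
apply: eq_bigr => j _; rewrite rmorph_sum; apply: eq_bigr => k _.
by rewrite 3!rmorphM !toCE fmorph_rat.
Qed.

Lemma T_toC (x y z : 'rV[rat]_m) :
  T c (toC x) (toC y) (toC z) = ratr (T c x y z).
Proof. rewrite /T fmorph_div; congr (_ / _); first by rewrite !rmorphD !B3_toC. by rewrite rmorph_nat. Qed.

Lemma gradF_toC (x : 'rV[rat]_m) l : gradF c (toC x) l = ratr (gradF c x l).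
Proof.
rewrite /gradF rmorph_sum; apply: eq_bigr => i _; rewrite rmorph_sum.
apply: eq_bigr => j _; rewrite rmorph_sum; apply: eq_bigr => k _.
by rewrite rmorphM fmorph_rat !(rmorphM, rmorphD) !toCE !rmorph_nat.
Qed.

Lemma toC_eq0 (x : 'rV[rat]_m) : (toC x == 0) = (x == 0).
Proof. by rewrite /toC map_mx_eq0. Qed.

Lemma toCD (x y : 'rV[rat]_m) : toC (x + y) = toC x + toC y.
Proof. by apply/rowP => i; rewrite !mxE rmorphD. Qed.
Lemma toCZ (a : rat) (x : 'rV[rat]_m) : toC (a *: x) = ratr a *: toC x.
Proof. by apply/rowP => i; rewrite !mxE rmorphM. Qed.
Lemma toCN (x : 'rV[rat]_m) : toC (- x) = - toC x.
Proof. by apply/rowP => i; rewrite !mxE rmorphN. Qed.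
Lemma toCB (x y : 'rV[rat]_m) : toC (x - y) = toC x - toC y.
Proof. by rewrite toCD toCN. Qed.

End Morph.


Section Quant.
Variables (R : numFieldType) (m : nat) (c : coeffs m) (P Q : 'rV[R]_m).
Local Notation T := (T c).
Implicit Types (a b : R) (U V W Y Z y v : 'rV[R]_m).

Definition sig (y : 'rV[R]_m) := 3 * T Q Q y.
Definition tau (y : 'rV[R]_m) := T P Q y.
Definition pp (y : 'rV[R]_m) := 3 * T P y y.
Definition rho (y : 'rV[R]_m) := 3 * T Q y y.
Definition ff (y : 'rV[R]_m) := T y y y.
Definition EE (y : 'rV[R]_m) := sig y * pp y ^+ 2 - 6 * tau y * rho y * pp y + 36 * tau y ^+ 2 * ff y.
Definition al (y : 'rV[R]_m) := 2 * sig y * pp y - 6 * tau y * rho y.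
Definition xx (y : 'rV[R]_m) := al y *: P + (- 6 * tau y * pp y) *: Q + (36 * tau y ^+ 2) *: y.

Lemma sig_sh y v a : sig (y + a *: v) = sig y + a * sig v.
Proof. rewrite /sig TD3 TZ3; ring. Qed.
Lemma tau_sh y v a : tau (y + a *: v) = tau y + a * tau v.
Proof. by rewrite /tau TD3 TZ3. Qed.
Lemma pp_sh y v a : pp (y + a *: v) = pp y + 2 * a * (3 * T P y v) + a ^+ 2 * pp v.
Proof. rewrite /pp !(TD2, TD3, TZ2, TZ3) (TS23 c P v y); ring. Qed.
Lemma rho_sh y v a : rho (y + a *: v) = rho y + 2 * a * (3 * T Q y v) + a ^+ 2 * rho v.
Proof. rewrite /rho !(TD2, TD3, TZ2, TZ3) (TS23 c Q v y); ring. Qed.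
Lemma ff_sh y v a : ff (y + a *: v) =
  ff y + 3 * a * T y y v + 3 * a ^+ 2 * T y v v + a ^+ 3 * ff v.
Proof.
rewrite /ff !(TD1, TD2, TD3, TZ1, TZ2, TZ3).
rewrite (TS23 c y v y) (TS13 c v y y) (TS12 c v y v) (TS13 c v v y); ring.
Qed.

Lemma V1 y v : 3 * T (xx y) (xx y) v = al y ^+ 2 * (3 * T P P v)
  + 36 * tau y ^+ 2 * ((-137/60) * EE (y + 0%:R *: v) + 5 * EE (y + 1%:R *: v)
     - 5 * EE (y + 2%:R *: v) + (10/3) * EE (y + 3%:R *: v)
     - (5/4) * EE (y + 4%:R *: v) + (1/5) * EE (y + 5%:R *: v))
  - 72 * tau y * EE (y + 0%:R *: v) * T P Q v.
Proof.
rewrite /EE !(sig_sh, tau_sh, pp_sh, rho_sh, ff_sh).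
rewrite /xx !(TD1, TD2, TZ1, TZ2) (TS12 c Q P v) (TS12 c y P v) (TS12 c y Q v).
rewrite /al /sig /tau /pp /rho /ff.
by field.
Qed.


Lemma T1l a b U V Y Z : T (a *: U + b *: V) Y Z = a * T U Y Z + b * T V Y Z.
Proof. by rewrite TD1 !TZ1. Qed.
Lemma T3l a b U V Y Z : T Y Z (a *: U + b *: V) = a * T Y Z U + b * T Y Z V.
Proof. by rewrite TD3 !TZ3. Qed.
Lemma T2l a b U V W : T (a *: U + b *: V) (a *: U + b *: V) W =
  a ^+ 2 * T U U W + 2 * a * b * T U V W + b ^+ 2 * T V V W.
Proof. rewrite !(TD1, TD2, TZ1, TZ2) (TS12 c V U W); ring. Qed.
Lemma Tcub a b U V : T (a *: U + b *: V) (a *: U + b *: V) (a *: U + b *: V) =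
  a ^+ 3 * T U U U + 3 * a ^+ 2 * b * T U U V + 3 * a * b ^+ 2 * T U V V
  + b ^+ 3 * T V V V.
Proof.
rewrite !(TD1, TD2, TD3, TZ1, TZ2, TZ3).
rewrite (TS23 c U V U) (TS13 c V U U) (TS12 c V U V) (TS13 c V V U); ring.
Qed.

Definition AA (S : 'rV[R]_m) := pp S *: S + (- ff S) *: P.
Definition KK (S : 'rV[R]_m) := rho S * pp S - 6 * tau S * ff S.
Definition BB (S : 'rV[R]_m) := sig S *: AA S + (- KK S) *: Q.

Section Hyps.
Variables (S : 'rV[R]_m).
Variables (hPPP : T P P P = 0) (hQQQ : T Q Q Q = 0) (hPPQ : T P P Q = 0)
  (hQQP : T Q Q P = 0) (hPPS : T P P S = 0).

Lemma AA_tan : T P P (AA S) = 0.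
Proof. by rewrite /AA T3l hPPS hPPP !mulr0 addr0. Qed.
Lemma AA_on : T (AA S) (AA S) (AA S) = 0.
Proof.
rewrite /AA Tcub (TS13 c S S P) (TS13 c S P P) hPPS hPPP /pp /ff; ring.
Qed.
Lemma AA_q : 3 * T (AA S) (AA S) P = pp S ^+ 3.
Proof. rewrite /AA T2l (TS13 c S S P) (TS13 c S P P) hPPS hPPP /pp; ring. Qed.
Lemma AA_QQ : 3 * T Q Q (AA S) = pp S * sig S.
Proof. rewrite /AA T3l hQQP /sig; ring. Qed.
Lemma AA_AAQ : 3 * T (AA S) (AA S) Q = pp S * KK S.
Proof.
rewrite /AA T2l (TS13 c S S Q) (TS13 c S P Q) (TS12 c Q P S) hPPQ /KK /rho /tau /pp; ring.
Qed.
Lemma AA_PQ : T (AA S) Q P = pp S * tau S.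
Proof.
rewrite /AA T1l (TS13 c S Q P) (TS23 c P Q P) hPPQ /tau; ring.
Qed.
Lemma BB_tan : T P P (BB S) = 0.
Proof. by rewrite /BB T3l AA_tan hPPQ !mulr0 addr0. Qed.
Lemma BB_on : T (BB S) (BB S) (BB S) = 0.
Proof.
have h1 := AA_AAQ; have h2 := AA_QQ.
rewrite /BB Tcub AA_on hQQQ (TS13 c (AA S) Q Q).
have -> : T (AA S) (AA S) Q = pp S * KK S / 3 by rewrite -h1; field.
have -> : T Q Q (AA S) = pp S * sig S / 3 by rewrite -h2; field.
by field.
Qed.
Lemma BB_q : 3 * T (BB S) (BB S) P = pp S * sig S * EE S.
Proof.
have h1 := AA_q; have h2 := AA_PQ.
rewrite /BB T2l hQQP h2.
have -> : T (AA S) (AA S) P = pp S ^+ 3 / 3 by rewrite -h1; field.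
rewrite /EE /KK; by field.
Qed.
Lemma line_AQ a b : T (a *: AA S + b *: Q) (a *: AA S + b *: Q) (a *: AA S + b *: Q)
  = pp S * a * b * (KK S * a + sig S * b).
Proof.
have h1 := AA_AAQ; have h2 := AA_QQ.
rewrite Tcub AA_on hQQQ (TS13 c (AA S) Q Q).
have -> : T (AA S) (AA S) Q = pp S * KK S / 3 by rewrite -h1; field.
have -> : T Q Q (AA S) = pp S * sig S / 3 by rewrite -h2; field.
by field.
Qed.
End Hyps.

End Quant.


Section PolyNat.
Variable R : numFieldType.

Lemma poly_nat_roots (p : {poly R}) : (forall n : nat, p.[n%:R] = 0) -> p = 0.
Proof.
move=> h; apply/eqP; apply: contraT => p0.
have := max_poly_roots p0 (rs := [seq i%:R | i <- iota 0 (size p)]).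
rewrite size_map size_iota ltnn; apply.
  by apply/allP => _ /mapP [i _ ->]; rewrite /root h.
by rewrite map_inj_uniq ?iota_uniq // => i j /eqP; rewrite eqr_nat => /eqP.
Qed.

Lemma poly_nz_nat (p : {poly R}) : p != 0 -> exists n : nat, p.[n%:R] != 0.
Proof.
move=> p0; apply: NNPP => nex; move/eqP: p0; apply; apply: poly_nat_roots => n.
by apply/eqP; apply/negPn/negP => hn; apply: nex; exists n.
Qed.

Section PF.
Variable m : nat.
Definition pf (h : 'rV[R]_m -> R) := forall a d : 'rV[R]_m,
  exists p : {poly R}, forall t, p.[t] = h (a + t *: d).

Lemma pf_const k : pf (fun _ => k).
Proof. by move=> a d; exists k%:P => t; rewrite hornerC. Qed.
Lemma pf_coord i : pf (fun y => y 0 i).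
Proof.
move=> a d; exists ((a 0 i)%:P + (d 0 i)%:P * 'X) => t.
rewrite !mxE !hornerE /=; ring.
Qed.
Lemma pf_add f g : pf f -> pf g -> pf (fun y => f y + g y).
Proof.
move=> hf hg a d; have [p hp] := hf a d; have [q hq] := hg a d.
by exists (p + q) => t; rewrite hornerD hp hq.
Qed.
Lemma pf_mul f g : pf f -> pf g -> pf (fun y => f y * g y).
Proof.
move=> hf hg a d; have [p hp] := hf a d; have [q hq] := hg a d.
by exists (p * q) => t; rewrite hornerM hp hq.
Qed.
Lemma pf_opp f : pf f -> pf (fun y => - f y).
Proof.
move=> hf a d; have [p hp] := hf a d.
by exists (- p) => t; rewrite hornerN hp.
Qed.
Lemma pf_sum (I : finType) (F : I -> 'rV[R]_m -> R) :
  (forall i, pf (F i)) -> pf (fun y => \sum_(i : I) F i y).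
Proof.
move=> hF a d.
have : forall s : seq I, exists p : {poly R}, forall t,
   p.[t] = \sum_(i <- s) F i (a + t *: d).
  elim=> [|i s [p hp]]; first by exists 0 => t; rewrite horner0 big_nil.
  have [q hq] := hF i a d.
  by exists (q + p) => t; rewrite hornerD hq hp big_cons.
move=> /(_ (index_enum I)) [p hp]; exists p => t; by rewrite hp.
Qed.
Lemma pf_ext f g : pf f -> (forall y, f y = g y) -> pf g.
Proof. move=> hf e a d; have [p hp] := hf a d; exists p => t; by rewrite hp e. Qed.

Definition pfv (g : 'rV[R]_m -> 'rV[R]_m) := forall i, pf (fun y => g y 0 i).
Lemma pfv_id : pfv id. Proof. by move=> i; exact: pf_coord. Qed.
Lemma pfv_const v : pfv (fun _ => v). Proof. by move=> i; exact: pf_const. Qed.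

Variable c : coeffs m.
Lemma pf_B3 g1 g2 g3 : pfv g1 -> pfv g2 -> pfv g3 ->
  pf (fun y => B3 c (g1 y) (g2 y) (g3 y)).
Proof.
move=> h1 h2 h3; rewrite /B3.
apply: pf_sum => i; apply: pf_sum => j; apply: pf_sum => k.
by do 3! apply: pf_mul => //; exact: pf_const.
Qed.
Lemma pf_T g1 g2 g3 : pfv g1 -> pfv g2 -> pfv g3 ->
  pf (fun y => T c (g1 y) (g2 y) (g3 y)).
Proof.
move=> h1 h2 h3; rewrite /T.
apply: pf_mul; last exact: pf_const.
by repeat apply: pf_add; apply: pf_B3.
Qed.

Lemma pf_prod_nz f g a b : pf f -> pf g -> f a != 0 -> g b != 0 ->
  exists t : R, f (a + t *: (b - a)) * g (a + t *: (b - a)) != 0.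
Proof.
move=> hf hg fa gb.
have [p hp] := hf a (b - a); have [q hq] := hg a (b - a).
have p0 : p != 0.
  by apply: contraNneq fa => p0; rewrite -[a]addr0 -(scale0r (b - a)) -hp p0 horner0.
have q0 : q != 0.
  apply: contraNneq gb => q0.
  by rewrite -[b](addrNK a) addrC -[b - a]scale1r -hq q0 horner0.
have [n hn] := poly_nz_nat (mulf_neq0 p0 q0).
by exists n%:R; rewrite -hp -hq -hornerM.
Qed.
End PF.
End PolyNat.


Lemma transfer (m : nat) (h : 'rV[algC]_m -> algC) : pf h ->
  (forall S : 'rV[rat]_m, h (toC S) = 0) -> forall z, h z = 0.
Proof.
move=> hpf h0.
suff H : forall k (z : 'rV[algC]_m), (forall i : 'I_m, (k <= i)%N -> exists r, z 0 i = ratr r) ->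
  h z = 0.
  by move=> z; apply: (H m) => i; rewrite leqNgt ltn_ord.
elim=> [|k IH] z hz.
  have hz' : forall i : 'I_m, exists r : rat, z 0 i = ratr r by move=> i; exact: hz.
  have [f hf] := fin_all_exists hz'.
  have -> : z = toC (\row_i f i) by apply/rowP => i; rewrite /toC !mxE hf.
  exact: h0.
case: (ltnP k m) => km; last first.
  apply: IH => i ki; exfalso; have := leq_trans km ki.
  by rewrite leqNgt ltn_ord.
pose ik := Ordinal km.
pose e := delta_mx 0 ik : 'rV[algC]_m.
pose z' := z - z 0 ik *: e.
have [p hp] := hpf z' e.
have key : forall r : rat, h (z' + ratr r *: e) = 0.
  move=> r; apply: IH => i ki.
  rewrite /z' /e !mxE eqxx /=.
  case: (i =P ik) => [->|ne].
    by exists r; rewrite /=; ring.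
  rewrite (_ : false%:R = 0 :> algC) //.
  rewrite !mulr0 subr0 addr0; apply: hz.
  rewrite ltn_neqAle ki andbT; apply/eqP => ek; apply: ne; apply: val_inj => /=.
  by rewrite ek.
have p0 : p = 0.
  by apply: poly_nat_roots => n; rewrite hp -(ratr_nat algC n) key.
have -> : z = z' + z 0 ik *: e by rewrite /z' subrK.
by rewrite -hp p0 horner0.
Qed.


Section Curve.
Variables (R : numFieldType) (m : nat) (c : coeffs m) (P Q y1 y2 : 'rV[R]_m).
Local Notation T := (T c).
Local Notation sig := (sig c Q). Local Notation tau := (tau c P Q).
Local Notation pp := (pp c P). Local Notation rho := (rho c Q).
Local Notation xx := (xx c P Q).

Definition X0 := (2 * sig y2 * pp y2 - 6 * tau y2 * rho y2) *: P
  + (- 6 * tau y2 * pp y2) *: Q + (36 * tau y2 ^+ 2) *: y2.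
Definition X1 := (4 * sig y2 * (3 * T P y2 y1) + 2 * sig y1 * pp y2
   - 12 * tau y2 * (3 * T Q y2 y1)) *: P
  + (- 12 * tau y2 * (3 * T P y2 y1)) *: Q + (36 * tau y2 ^+ 2) *: y1.
Definition X2 := (2 * sig y2 * pp y1 + 4 * sig y1 * (3 * T P y2 y1)
   - 6 * tau y2 * rho y1) *: P + (- 6 * tau y2 * pp y1) *: Q.
Definition Xt t := X0 + t *: X1 + t ^+ 2 *: X2.

Lemma xx_Y t : tau y1 = 0 -> sig y1 * pp y1 = 0 -> xx (y2 + t *: y1) = Xt t.
Proof.
move=> t1 sp.
have e : xx (y2 + t *: y1) = Xt t + (t ^+ 3 * (2 * (sig y1 * pp y1))) *: P.
  rewrite /xx /al (sig_sh c) (tau_sh c) (pp_sh c) (rho_sh c) t1 mulr0 addr0.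
  rewrite /Xt /X0 /X1 /X2; apply/rowP => i; rewrite !mxE; ring.
by rewrite e sp mulr0 mulr0 scale0r addr0.
Qed.

End Curve.

Section PiSec.
Variables (R : numFieldType) (m : nat) (c : coeffs m).
Local Notation T := (T c).


Definition cfs (A0 A1 A2 v : 'rV[R]_m) := [:: 3 * T A0 A0 v; 6 * T A0 A1 v;
   6 * T A0 A2 v + 3 * T A1 A1 v; 6 * T A1 A2 v; 3 * T A2 A2 v].
Definition Pi (A0 A1 A2 v : 'rV[R]_m) := \poly_(i < 5) nth 0 (cfs A0 A1 A2 v) i.

Lemma Pi_horner (A0 A1 A2 v : 'rV[R]_m) t : (Pi A0 A1 A2 v).[t] =
  3 * T (A0 + t *: A1 + t ^+ 2 *: A2) (A0 + t *: A1 + t ^+ 2 *: A2) v.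
Proof.
rewrite /Pi horner_poly !big_ord_recl big_ord0 /=.
rewrite !(TD1, TD2, TZ1, TZ2) (TS12 c A1 A0 v) (TS12 c A2 A0 v) (TS12 c A2 A1 v).
rewrite /bump /=; ring.
Qed.

Lemma Pi_coef (A0 A1 A2 v : 'rV[R]_m) k : (Pi A0 A1 A2 v)`_k = nth 0 (cfs A0 A1 A2 v) k.
Proof.
rewrite /Pi coef_poly; case: ltnP => // k5.
by rewrite nth_default.
Qed.
End PiSec.


Section Sing.
Variables (m : nat) (c : coeffs m).
Local Notation T := (T c).

Lemma sum_delta_e (R : numFieldType) (a : 'I_m -> R) l :
  \sum_(k < m) a k * (delta_mx 0 l : 'rV[R]_m) 0 k = a l.
Proof.
rewrite (bigD1 l) //= mxE !eqxx mulr1 big1 ?addr0 // => k /negbTE kl.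
by rewrite mxE kl andbF mulr0.
Qed.

Lemma sing_of (P w : 'rV[algC]_m) : smooth c -> T P P w != 0 ->
  forall x, x != 0 -> (forall v, T P P v = 0 -> T x x v = 0) -> T x x w = 0 -> False.
Proof.
move=> sm Pw x x0 hv hw; have [l /eqP hl] := sm x x0; apply: hl.
rewrite -(sum_delta_e (gradF c x) l) grad_T.
pose e := delta_mx 0 l : 'rV[algC]_m.
pose mu := T P P e / T P P w.
rewrite (_ : delta_mx 0 l = (e - mu *: w) + mu *: w); last by rewrite subrK.
rewrite TD3 TZ3 hw mulr0 addr0 hv ?mulr0 //.
by rewrite TB3 TZ3 /mu divfK // subrr.
Qed.

Lemma V5 (P Q y1 y2 w : 'rV[algC]_m) :
  smooth c -> T P P w != 0 ->
  (forall y v, T P P y = 0 -> T P P v = 0 -> T (xx c P Q y) (xx c P Q y) v = 0) ->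
  T P P y1 = 0 -> T P P y2 = 0 -> tau c P Q y1 = 0 -> tau c P Q y2 != 0 ->
  T P Q P = 0 -> T P Q Q = 0 ->
  sig c Q y1 * pp c P y1 = 0 -> X1 c P Q y1 y2 != 0 -> False.
Proof.
move=> sm Pw V1c h1 h2 t1 t2 PQP PQQ sp X1nz.
set A0 := X0 c P Q y2; set A1 := X1 c P Q y1 y2; set A2 := X2 c P Q y1 y2.
have hX t : xx c P Q (y2 + t *: y1) = A0 + t *: A1 + t ^+ 2 *: A2.
  by rewrite xx_Y.
have inTP t : T P P (y2 + t *: y1) = 0 by rewrite TD3 TZ3 h1 h2 mulr0 addr0.
have tauY t : tau c P Q (y2 + t *: y1) = tau c P Q y2.
  by rewrite (tau_sh c) t1 mulr0 addr0.
have Xnz t : A0 + t *: A1 + t ^+ 2 *: A2 != 0.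
  rewrite -hX; apply/eqP => X0e.
  have : tau c P Q (xx c P Q (y2 + t *: y1)) = 0 by rewrite X0e /tau T0_3.
  rewrite /tau /xx !TD3 !TZ3 PQP PQQ -/(tau c P Q _) tauY !mulr0 !add0r.
  by move/eqP; apply/negP; rewrite (mulf_neq0 (mulf_neq0 _ (expf_neq0 _ t2)) t2) // pnatr_eq0.
have hv t v : T P P v = 0 ->
    T (A0 + t *: A1 + t ^+ 2 *: A2) (A0 + t *: A1 + t ^+ 2 *: A2) v = 0.
  by move=> hv; rewrite -hX V1c.
have Pv v : T P P v = 0 -> Pi c A0 A1 A2 v = 0.
  by move=> hv0; apply: poly_nat_roots => n; rewrite Pi_horner hv // mulr0.
case/boolP: (size (Pi c A0 A1 A2 w) == 1%N) => [/eqP ns1|ns]; last first.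
  have [t0 rt] := elimT (closed_rootP (Pi c A0 A1 A2 w)) ns.
  apply: (sing_of sm Pw (Xnz t0)); first by move=> v; exact: hv.
  move: rt; rewrite /root Pi_horner => /eqP.
  by move/eqP; rewrite mulf_eq0 pnatr_eq0 /= => /eqP.
have cz k : (0 < k)%N -> (Pi c A0 A1 A2 w)`_k = 0.
  by move=> k0; rewrite nth_default // ns1.
case: (eqVneq A2 0) => [A20|A2nz].
  apply: (sing_of sm Pw X1nz).
    move=> v /Pv Pv0; have := Pi_coef c A0 A1 A2 v 2; rewrite Pv0 coef0 /= A20 T0_2.
    by move/esym/eqP; rewrite mulr0 add0r mulf_eq0 pnatr_eq0 /= => /eqP.
  have := Pi_coef c A0 A1 A2 w 2; rewrite cz //= A20 T0_2.
  by move/esym/eqP; rewrite mulr0 add0r mulf_eq0 pnatr_eq0 /= => /eqP.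
apply: (sing_of sm Pw A2nz).
  move=> v /Pv Pv0; have := Pi_coef c A0 A1 A2 v 4; rewrite Pv0 coef0 /=.
  by move/esym/eqP; rewrite mulf_eq0 pnatr_eq0 /= => /eqP.
have := Pi_coef c A0 A1 A2 w 4; rewrite cz //=.
by move/esym/eqP; rewrite mulf_eq0 pnatr_eq0 /= => /eqP.
Qed.
End Sing.


Lemma T_lin3 (R : numFieldType) m (c : coeffs m) (a b x : 'rV[R]_m) :
  T c a b x = \sum_(i < m) x 0 i * T c a b (delta_mx 0 i).
Proof.
rewrite {1}(row_sum_delta x).
rewrite (big_morph (T c a b) (TD3 c a b) (T0_3 c a b)).
by apply: eq_bigr => i _; rewrite TZ3.
Qed.

Lemma exists_y1 m (c : coeffs m) (P Q : 'rV[rat]_m) : (5 <= m)%N ->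
  exists y1 (C : 'M[rat]_m) j, [/\ T c P P y1 = 0, T c P Q y1 = 0,
    P *m C = 0, Q *m C = 0 & (y1 *m C) 0 j != 0].
Proof.
move=> m5.
pose G : 'M[rat]_(m, 2) := \matrix_(i, k) (if k == 0 then T c P P (delta_mx 0 i)
   else T c P Q (delta_mx 0 i)).
have GE x k : (x *m G) 0 k = if k == 0 then T c P P x else T c P Q x.
  rewrite mxE; under eq_bigr do rewrite mxE.
  by case: (k == 0); rewrite T_lin3.
pose K := kermx G.
pose N := col_mx P Q.
have rK : (m - 2 <= \rank K)%N by rewrite mxrank_ker leq_sub2l // rank_leq_col.
have nKN : ~~ (K <= N)%MS.
  apply/negP => /mxrankS rKN.
  have := leq_trans rK (leq_trans rKN (rank_leq_row N)).
  by rewrite leq_subLR; move/(leq_trans m5).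
have [i ni] := elimT row_subPn nKN.
pose y1 := row i K.
have y1G : y1 *m G = 0 by rewrite /y1 -row_mul mulmx_ker row0.
have PN : (P <= N)%MS /\ (Q <= N)%MS.
  by apply/andP; rewrite -col_mx_sub submx_refl.
case: PN; rewrite !submxE => /eqP PC /eqP QC.
move: ni; rewrite submxE -/y1 => ny.
have [j nj] : exists j, (y1 *m cokermx N) 0 j != 0.
  apply: NNPP => nex; move/eqP: ny; apply; apply/rowP => j.
  rewrite !mxE; apply/eqP; apply/negPn/negP => hj; apply: nex; exists j.
  by rewrite mxE.
exists y1, (cokermx N), j; split=> //.
  by have := GE y1 0; rewrite y1G mxE eqxx.
by have := GE y1 1; rewrite y1G mxE.
Qed.


Lemma tangentE (R : numFieldType) m (c : coeffs m) (X Y : 'rV[R]_m) :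
  tangent c X Y = (T c X X Y == 0).
Proof. by rewrite /tangent grad_T mulf_eq0 pnatr_eq0. Qed.

Lemma grad_nz m (c : coeffs m) (X : 'rV[rat]_m) : smooth c -> X != 0 ->
  exists j, T c X X (delta_mx 0 j) != 0.
Proof.
move=> sm X0; have tX : toC X != 0 by rewrite toC_eq0.
have [l hl] := sm (toC X) tX.
exists l; move: hl; rewrite gradF_toC fmorph_eq0.
rewrite -(sum_delta_e (gradF c X) l) grad_T mulf_eq0 pnatr_eq0 /=.
by [].
Qed.

Lemma span_tangent m (c : coeffs m) (P B : 'rV[rat]_m) :
  onX c P -> onX c B -> T c P P B = 0 -> T c B B P != 0 -> spanP c P B.
Proof.
move=> [P0 FP] hB PB BP; have [B0 FB] := hB.
rewrite cubF_T in FP; rewrite cubF_T in FB.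
have hP : spanP c P P by rewrite /spanP; apply: span_base; exists 1; rewrite oner_neq0 scale1r.
rewrite /spanP; apply: (span_step hP hP) => //.
exists P, B; split.
  move=> a b e.
  have : T c B B (a *: P + b *: B) = 0 by rewrite e T0_3.
  rewrite T3l FB mulr0 addr0 => /eqP; rewrite mulf_eq0 (negbTE BP) orbF => /eqP a0.
  split=> //; move: e; rewrite a0 scale0r add0r => /eqP; rewrite scaler_eq0 (negbTE B0).
  by rewrite orbF => /eqP.
exists 1, 0, 1, 0, 0, 1, (3 * T c B B P); split.
- by exists 1; rewrite oner_neq0 scale1r scale0r addr0 scale1r.
- by exists 1; rewrite oner_neq0 scale1r scale0r addr0 scale1r.
- by exists 1; rewrite oner_neq0 scale1r scale0r add0r scale1r.
- by rewrite mulf_neq0 // pnatr_eq0.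
move=> a b; rewrite cubF_T Tcub FP FB PB (TS13 c P B B); ring.
Qed.

Lemma onX_of m (c : coeffs m) (X P : 'rV[rat]_m) :
  T c X X X = 0 -> T c X X P != 0 -> onX c X.
Proof.
move=> F0 nz; split; last by rewrite cubF_T.
by apply: contraNneq nz => ->; rewrite T0_1.
Qed.

Lemma span_hard m (c : coeffs m) (P Q S : 'rV[rat]_m) :
  onX c P -> onX c Q -> T c P P Q = 0 -> T c Q Q P = 0 -> T c P P S = 0 ->
  sig c Q S * pp c P S * EE c P Q S != 0 -> spanP c P Q.
Proof.
move=> hP hQ PQ QP PS nz.
have [P0 FP] := hP; have [Q0 FQ] := hQ; rewrite cubF_T in FP; rewrite cubF_T in FQ.
have hp : pp c P S != 0 by move: nz; rewrite !mulf_eq0 negb_or => /andP [] /norP [].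
have hs : sig c Q S != 0 by move: nz; rewrite !mulf_eq0 negb_or => /andP [] /norP [].
pose A := AA c P S; pose B := BB c P Q S.
have fa1 : T c P P A = 0 by apply: AA_tan.
have fa2 : T c A A A = 0 by apply: AA_on.
have fa3 : 3 * T c A A P = pp c P S ^+ 3 by apply: AA_q.
have fa4 : 3 * T c Q Q A = pp c P S * sig c Q S by apply: AA_QQ.
have fb1 : T c P P B = 0 by apply: BB_tan.
have fb2 : T c B B B = 0 by apply: BB_on.
have fb3 : 3 * T c B B P = pp c P S * sig c Q S * EE c P Q S by apply: BB_q.
have fl a b : T c (a *: A + b *: Q) (a *: A + b *: Q) (a *: A + b *: Q)
   = pp c P S * a * b * (KK c P Q S * a + sig c Q S * b) by apply: line_AQ.
have AP : T c A A P != 0.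
  by apply: contraNneq hp => e; move: fa3; rewrite e mulr0 => /esym/eqP; rewrite expf_eq0.
have BP : T c B B P != 0.
  apply: contraNneq nz => e; by rewrite (mulrC (sig c Q S)) -fb3 e mulr0.
have sA := span_tangent hP (onX_of fa2 AP) fa1 AP.
have sB := span_tangent hP (onX_of fb2 BP) fb1 BP.
rewrite /spanP; apply: (span_step sA sB hQ).
exists A, Q; split.
  move=> a b e.
  have : T c Q Q (a *: A + b *: Q) = 0 by rewrite e T0_3.
  rewrite T3l FQ mulr0 addr0 => /eqP; rewrite mulf_eq0 => /orP [/eqP a0|].
    split=> //; move: e; rewrite a0 scale0r add0r => /eqP; rewrite scaler_eq0 (negbTE Q0).
    by rewrite orbF => /eqP.
  move=> /eqP e3; exfalso; move: fa4; rewrite e3 mulr0 => /esym/eqP.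
  by rewrite mulf_eq0 (negbTE hp) (negbTE hs).
exists 1, 0, (sig c Q S), (- KK c P Q S), 0, 1, (pp c P S); split.
- by exists 1; rewrite oner_neq0 scale1r scale0r addr0 scale1r.
- by exists 1; rewrite oner_neq0 scale1r.
- by exists 1; rewrite oner_neq0 scale1r scale0r add0r scale1r.
- by [].
move=> a b; rewrite cubF_T fl; ring.
Qed.

Lemma ratr_natM (a : rat) (k : nat) : ratr (k%:R * a) = k%:R * ratr a :> algC.
Proof. by rewrite rmorphM rmorph_nat. Qed.

Lemma ratr_EEpoly (s t p r f : rat) :
  ratr (s * p ^+ 2 - 6 * t * r * p + 36 * t ^+ 2 * f) =
  ratr s * ratr p ^+ 2 - 6 * ratr t * ratr r * ratr p + 36 * ratr t ^+ 2 * ratr f :> algC.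
Proof. by rewrite !(rmorph_nat, rmorphXn, rmorphD, rmorphB, rmorphN, rmorphM). Qed.

Section MorphQ.
Variables (m : nat) (c : coeffs m) (P Q : 'rV[rat]_m).

Lemma sig_toC y : sig c (toC Q) (toC y) = ratr (sig c Q y).
Proof. by rewrite /sig T_toC ratr_natM. Qed.
Lemma tau_toC y : tau c (toC P) (toC Q) (toC y) = ratr (tau c P Q y).
Proof. by rewrite /tau T_toC. Qed.
Lemma pp_toC y : pp c (toC P) (toC y) = ratr (pp c P y).
Proof. by rewrite /pp T_toC ratr_natM. Qed.
Lemma rho_toC y : rho c (toC Q) (toC y) = ratr (rho c Q y).
Proof. by rewrite /rho T_toC ratr_natM. Qed.
Lemma ff_toC y : ff c (toC y) = ratr (ff c y).
Proof. by rewrite /ff T_toC. Qed.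
Lemma EE_toC y : EE c (toC P) (toC Q) (toC y) = ratr (EE c P Q y).
Proof.
rewrite /EE sig_toC tau_toC pp_toC rho_toC ff_toC.
by rewrite ratr_EEpoly.
Qed.
End MorphQ.

Section PFC.
Variables (R : numFieldType) (m : nat) (c : coeffs m) (P Q : 'rV[R]_m).
Lemma pf_sig : pf (sig c Q).
Proof. apply: pf_mul; [exact: pf_const | apply: pf_T; [exact: pfv_const|exact: pfv_const|exact: pfv_id]]. Qed.
Lemma pf_tau : pf (tau c P Q).
Proof. apply: pf_T; [exact: pfv_const|exact: pfv_const|exact: pfv_id]. Qed.
Lemma pf_pp : pf (pp c P).
Proof. apply: pf_mul; [exact: pf_const | apply: pf_T; [exact: pfv_const|exact: pfv_id|exact: pfv_id]]. Qed.
Lemma pf_rho : pf (rho c Q).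
Proof. apply: pf_mul; [exact: pf_const | apply: pf_T; [exact: pfv_const|exact: pfv_id|exact: pfv_id]]. Qed.
Lemma pf_ff : pf (@ff R m c).
Proof. apply: pf_T; exact: pfv_id. Qed.
Lemma pf_exp (f : 'rV[R]_m -> R) k : pf f -> pf (fun y => f y ^+ k).
Proof.
move=> hf; elim: k => [|k IH]; first by apply: (pf_ext (pf_const 1)) => y; rewrite expr0.
by apply: (pf_ext (pf_mul hf IH)) => y; rewrite exprS.
Qed.
Lemma pf_EE : pf (EE c P Q).
Proof.
rewrite /EE; apply: pf_add; first apply: pf_add.
- apply: pf_mul; [exact: pf_sig | apply: pf_exp; exact: pf_pp].
- apply: pf_opp; apply: pf_mul; last exact: pf_pp.
  apply: pf_mul; last exact: pf_rho.
  apply: pf_mul; [exact: pf_const | exact: pf_tau].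
apply: pf_mul; last exact: pf_ff.
apply: pf_mul; [exact: pf_const | apply: pf_exp; exact: pf_tau].
Qed.
Lemma pf_H : pf (fun y => sig c Q y * pp c P y * EE c P Q y).
Proof. by apply: pf_mul; [apply: pf_mul; [exact: pf_sig|exact: pf_pp]|exact: pf_EE]. Qed.
Lemma pf_SP : pf (fun y => sig c Q y * pp c P y).
Proof. by apply: pf_mul; [exact: pf_sig|exact: pf_pp]. Qed.
End PFC.

Lemma pf_comp (R : numFieldType) m (h : 'rV[R]_m -> R) (phi : 'rV[R]_m -> 'rV[R]_m) :
  pf h -> (forall a d t, phi (a + t *: d) = phi a + t *: phi d) -> pf (fun z => h (phi z)).
Proof. by move=> hh hl a d; have [p hp] := hh (phi a) (phi d); exists p => t; rewrite hl hp. Qed.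


Unset Implicit Arguments.

Theorem lemma5p4 (n : nat) (c : coeffs n.+2) (P Q : 'rV[rat]_n.+2) :
  (3 <= n)%N -> smooth c ->
  onX c P -> ~ eckardt c P ->
  onX c Q -> tangent c P Q -> ~ (tangent c Q =1 tangent c P) ->
  spanP c P Q.
Proof.
move=> n3 sm hP nE hQ tPQ nT.
have [P0 FP] := hP; have [Q0 FQ] := hQ; rewrite cubF_T in FP; rewrite cubF_T in FQ.
move: tPQ; rewrite tangentE => /eqP PQ.
have [j gj] := grad_nz sm P0.
have [jq gq] := grad_nz sm Q0.
case: (eqVneq (T c Q Q P) 0) => [QP|QP]; last exact: span_tangent hP hQ PQ QP.
suff [S [PS nz]] : exists S, T c P P S = 0 /\ sig c Q S * pp c P S * EE c P Q S != 0.
  exact: span_hard hP hQ PQ QP PS nz.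
apply: NNPP => H0.
have H0' : forall S, T c P P S = 0 -> sig c Q S * pp c P S * EE c P Q S = 0.
  move=> S PS; apply/eqP; apply/negPn/negP => nz; apply: H0; by exists S.
clear H0.
have [S1 [PS1 s1]] : exists S1, T c P P S1 = 0 /\ sig c Q S1 != 0.
  have [x hx] := not_all_ex_not _ _ nT.
  move: hx; rewrite !tangentE.
  case: (eqVneq (T c P P x) 0) => [Px|Px]; case: (eqVneq (T c Q Q x) 0) => [Qx|Qx] // _.
    by exists x; split => //; rewrite /sig mulf_neq0 // pnatr_eq0.
  pose mu := T c P P (delta_mx 0 jq) / T c P P x.
  exists (delta_mx 0 jq - mu *: x); split.
    by rewrite TB3 TZ3 /mu divfK // subrr.
  by rewrite /sig TB3 TZ3 Qx mulr0 subr0 mulf_neq0 // pnatr_eq0.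
pose PC := toC P; pose QC := toC Q.
have FPC : T c PC PC PC = 0 by rewrite /PC T_toC FP rmorph0.
have PQC : T c PC PC QC = 0 by rewrite /PC /QC T_toC PQ rmorph0.
have QPC : T c QC QC PC = 0 by rewrite /PC /QC T_toC QP rmorph0.
pose ej := delta_mx 0 j : 'rV[rat]_n.+2.
pose ejC := toC ej.
have gjC : T c PC PC ejC != 0 by rewrite /PC /ejC T_toC fmorph_eq0.
have [R0 [PR0 pR0]] : exists R0, T c PC PC R0 = 0 /\ pp c PC R0 != 0.
  have [R0 hR] := not_all_ex_not _ _ nE.
  apply: NNPP => nex; apply: hR => R00 FR0 tR a b.
  move: tR; rewrite tangentE => /eqP tR.
  split; last by rewrite tangentE TD3 !TZ3 FPC tR !mulr0 addr0.
  have pp0 : pp c PC R0 = 0.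
    apply/eqP; apply/negPn/negP => h; apply: nex; by exists R0.
  move: FR0; rewrite !cubF_T Tcub FPC tR => ->.
  move: pp0; rewrite /pp => /eqP; rewrite mulf_eq0 pnatr_eq0 /= => /eqP ->.
  by rewrite !mulr0 !addr0.
have HP : forall z, T c PC PC z = 0 ->
    sig c QC z * pp c PC z * EE c PC QC z = 0.
  pose phi := fun z : 'rV[algC]_n.+2 => z - (T c PC PC z / T c PC PC ejC) *: ejC.
  have philin : forall a d t, phi (a + t *: d) = phi a + t *: phi d.
    move=> a d t; rewrite /phi TD3 TZ3; apply/rowP => i; rewrite !mxE.
    by field.
  have tr := transfer (pf_comp (pf_H c PC QC) philin).
  have hyp : forall S : 'rV[rat]_n.+2,
      sig c QC (phi (toC S)) * pp c PC (phi (toC S)) * EE c PC QC (phi (toC S)) = 0.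
    move=> S.
    have -> : phi (toC S) = toC (S - (T c P P S / T c P P ej) *: ej).
      by rewrite /phi toCB toCZ /PC /ejC !T_toC [in RHS]fmorph_div.
    rewrite /PC /QC sig_toC pp_toC EE_toC -!rmorphM H0' ?rmorph0 //.
    by rewrite TB3 TZ3 divfK // subrr.
  move=> z Pz; have := tr hyp z.
  by rewrite /phi Pz mul0r scale0r subr0.
have s1C : sig c QC (toC S1) != 0 by rewrite /QC sig_toC fmorph_eq0.
have PS1C : T c PC PC (toC S1) = 0 by rewrite /PC T_toC PS1 rmorph0.
have [z1 [Pz1 sp1]] : exists z1, T c PC PC z1 = 0 /\ sig c QC z1 * pp c PC z1 != 0.
  have [t ht] := pf_prod_nz (pf_sig c QC) (pf_pp c PC) s1C pR0.
  exists (toC S1 + t *: (R0 - toC S1)); split => //.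
  by rewrite TD3 TZ3 TB3 PS1C PR0 subrr mulr0 addr0.
have E0 : forall z, T c PC PC z = 0 -> EE c PC QC z = 0.
  move=> z Pz; apply/eqP; apply/negPn/negP => Ez.
  have [t ht] := pf_prod_nz (pf_SP c PC QC) (pf_EE c PC QC) sp1 Ez.
  move: ht; rewrite HP ?eqxx //.
  by rewrite TD3 TZ3 TB3 Pz1 Pz subrr mulr0 addr0.
have [y2 [Py2 ty2]] : exists y2, T c PC PC y2 = 0 /\ tau c PC QC y2 != 0.
  apply: NNPP => nex.
  have t0 : tau c PC QC z1 = 0.
    apply/eqP; apply/negPn/negP => h; apply: nex; by exists z1.
  move: (E0 z1 Pz1); rewrite /EE t0 !(mulr0, mul0r, expr0n, subr0, addr0) /=.
  move/eqP; rewrite expr2 mulrA mulf_eq0 (negbTE sp1) /= => /eqP pz.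
  by move: sp1; rewrite pz mulr0 eqxx.
have m5 : (5 <= n.+2)%N by rewrite ltnS.
have [y1 [C [j1 [Py1 ty1 PCm QCm y1C]]]] := exists_y1 c P Q m5.
have Py1C : T c PC PC (toC y1) = 0 by rewrite /PC T_toC Py1 rmorph0.
have ty1C : tau c PC QC (toC y1) = 0 by rewrite /PC /QC tau_toC /tau ty1 rmorph0.
have sp1C : sig c QC (toC y1) * pp c PC (toC y1) = 0.
  move: (E0 _ Py1C); rewrite /EE ty1C !(mulr0, mul0r, expr0n, subr0, addr0) /=.
  move/eqP; rewrite expr2 mulrA mulf_eq0 => /orP [/eqP //|/eqP ->].
  by rewrite mulr0.
have X1nz : X1 c PC QC (toC y1) y2 != 0.
  apply/eqP => X10.
  have := congr1 (fun x => (x *m map_mx ratr C) 0 j1) X10.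
  rewrite /X1 !mulmxDl -!scalemxAl /PC /QC /toC -!map_mxM PCm QCm !map_mx0 mul0mx.
  rewrite !scaler0 !add0r !mxE => /eqP; rewrite mulf_eq0 => /orP [].
    by rewrite mulf_eq0 pnatr_eq0 /= expf_eq0 (negbTE ty2) andbF.
  by rewrite fmorph_eq0; move: y1C; rewrite mxE => /negbTE ->.
have V1c : forall y v, T c PC PC y = 0 -> T c PC PC v = 0 ->
    T c (xx c PC QC y) (xx c PC QC y) v = 0.
  move=> y v Py Pv.
  have Ek : forall k, EE c PC QC (y + k *: v) = 0.
    by move=> k; apply: E0; rewrite TD3 TZ3 Py Pv mulr0 addr0.
  have := V1 c PC QC y v; rewrite !Ek Pv !(mulr0, addr0, subr0, mul0r).
  by move/eqP; rewrite mulf_eq0 pnatr_eq0 /= => /eqP.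
apply: (V5 sm gjC V1c Py1C Py2 ty1C ty2 _ _ sp1C X1nz).
  by rewrite (TS23 c PC QC PC).
by rewrite (TS13 c PC QC QC).
Qed.
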